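(* Let $t\in(1,2]$ and $n\in\mathbb{Z}^{+}$. Then: (a) $k(n,t)\geq \lfloor a(t)n\rfloor$; (b) $k(n,t)>0$ if and only if $n+1\leq t^n$; (c) $l(n,t)\geq \lfloor b(t)n\rfloor$; (d) $l(n,t)>0$ if and only if $2(n+1)\leq t^n$.
   Context: Let $f,g:(0,\infty)\to\mathbb{R}$ be $f(x)=\frac{(1+x)^{1+x}}{x^x}$ and $g(x)=\frac{2^x(1+x)^{1+x}}{x^x}$; both are strictly increasing with $\lim_{x\to0^+}f(x)=\lim_{x\to0^+}g(x)=1$. For $t\in(1,\infty)$, $a(t)$ and $b(t)$ denote the unique solutions $x>0$ of $f(x)=t$ and $g(x)=t$, respectively. For $t\in(1,2]$ and $n\in\mathbb{Z}^+$, $k(n,t)$ is the nonnegative integer with $\binom{n+k(n,t)}{n}\leq t^n<\binom{n+k(n,t)+1}{n}$, and $l(n,t)$ is the nonnegative integer with $2^{l(n,t)}\binom{n+l(n,t)}{n}\leq t^n<2^{l(n,t)+1}\binom{n+l(n,t)+1}{n}$. *)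

(* Defs.v *)
From Stdlib Require Import Reals Lra Lia ZArith ClassicalEpsilon.
Open Scope R_scope.

Definition f (x : R) : R := Rpower (1 + x) (1 + x) / Rpower x x.
Definition g (x : R) : R := Rpower 2 x * Rpower (1 + x) (1 + x) / Rpower x x.

(* a(t), b(t): the (unique, for t > 1) solution x > 0 of f x = t, resp. g x = t. *)
Definition a (t : R) : R := epsilon (inhabits 0) (fun x => 0 < x /\ f x = t).
Definition b (t : R) : R := epsilon (inhabits 0) (fun x => 0 < x /\ g x = t).

Definition k (n : nat) (t : R) : nat :=
  epsilon (inhabits 0%nat)
    (fun k => C (n + k) n <= t ^ n < C (n + k + 1) n).

Definition l (n : nat) (t : R) : nat :=
  epsilon (inhabits 0%nat)
    (fun l => 2 ^ l * C (n + l) n <= t ^ n < 2 ^ (l + 1) * C (n + l + 1) n).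

(* floor x as an integer (Int_part x = up x - 1 is the floor). *)
Definition floorZ (x : R) : Z := Int_part x.

(* Main.v *)
From Stdlib Require Import Reals Lra Lia ZArith ClassicalEpsilon.
From Coquelicot Require Import Hierarchy Continuity Derive AutoDerive.
Require Import Defs.
Open Scope R_scope.

Lemma C_nonneg N i : 0 <= C N i.
Proof. unfold C. apply Rle_mult_inv_pos. apply pos_INR.
apply Rmult_lt_0_compat; apply INR_fact_lt_0. Qed.

Lemma C_ratio n j : C (n+j+1) n = C (n+j) n * (INR (n+j+1) / INR (j+1)).
Proof. unfold C.
replace (n+j+1-n)%nat with (S j) by lia. replace (n+j-n)%nat with j by lia.
replace (n+j+1)%nat with (S (n+j)) by lia. replace (j+1)%nat with (S j) by lia.
change (fact (S (n+j))) with (S (n+j) * fact (n+j))%nat.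
change (fact (S j)) with (S j * fact j)%nat.
rewrite !mult_INR.
assert (INR (fact n) <> 0) by (apply not_0_INR; apply fact_neq_0).
assert (INR (fact j) <> 0) by (apply not_0_INR; apply fact_neq_0).
assert (INR (S j) <> 0) by (apply not_0_INR; lia).
field. auto. Qed.

Lemma C_n0 n : C (n+0) n = 1.
Proof. unfold C. replace (n+0-n)%nat with 0%nat by lia. rewrite Nat.add_0_r.
simpl fact. assert (INR (fact n) <> 0) by (apply not_0_INR; apply fact_neq_0).
simpl INR. field. auto. Qed.

Lemma C_n1 n : C (n+1) n = INR n + 1.
Proof. replace (n+1)%nat with (n+0+1)%nat by lia. rewrite C_ratio, C_n0.
rewrite Nat.add_0_r, plus_INR. simpl INR. field. Qed.

Definition H c n j := c ^ j * C (n+j) n.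

Lemma H_step c n j : 1 <= c -> H c n j <= H c n (S j).
Proof. intros Hc. unfold H. replace (n + S j)%nat with (n+j+1)%nat by lia.
rewrite C_ratio. simpl pow.
assert (1 <= c^j) by (apply pow_R1_Rle; auto).
assert (0 <= C (n+j) n) by apply C_nonneg.
assert (1 <= INR (n+j+1) / INR (j+1)).
{ apply Rmult_le_reg_r with (INR (j+1)). apply lt_0_INR; lia.
  unfold Rdiv. rewrite Rmult_assoc, Rinv_l. rewrite Rmult_1_l, Rmult_1_r. apply le_INR; lia.
  apply not_0_INR; lia. }
assert (0 <= c^j * C (n+j) n) by nra.
set (X := c^j * C (n+j) n) in *. set (r := INR (n+j+1) / INR (j+1)) in *.
assert (X <= X * r) by nra. assert (X * r <= c * (X * r)) by nra.
replace (c * c^j * (C (n+j) n * r)) with (c * (X * r)) by (unfold X; ring). lra. Qed.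

Lemma H_mono c n i j : 1 <= c -> (i <= j)%nat -> H c n i <= H c n j.
Proof. intros Hc Hij. induction Hij. lra. eapply Rle_trans. apply IHHij. apply H_step; auto. Qed.

Lemma C_ge n j : (0 < n)%nat -> INR j + 1 <= C (n+j) n.
Proof. intros Hn. induction j.
rewrite C_n0. simpl. lra.
replace (n + S j)%nat with (n+j+1)%nat by lia. rewrite C_ratio.
assert (0 < INR (j+1)) by (apply lt_0_INR; lia).
assert (INR (j+1) = INR j + 1) by (rewrite plus_INR; simpl; lra).
assert (INR (n+j+1) >= INR j + 2) by (rewrite !plus_INR; simpl; assert (1 <= INR n) by (apply (le_INR 1); lia); lra).
rewrite S_INR.
apply Rle_trans with ((INR j + 1) * (INR (n + j + 1) / INR (j + 1))).
rewrite H1. unfold Rdiv. field_simplify. lra. lra.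
apply Rmult_le_compat_r. apply Rle_mult_inv_pos. apply pos_INR. auto. auto. Qed.

Lemma H_ge c n j : (0 < n)%nat -> 1 <= c -> INR j + 1 <= H c n j.
Proof. intros Hn Hc. unfold H. pose proof (C_ge n j Hn). pose proof (pow_R1_Rle c j Hc).
pose proof (pos_INR j). nra. Qed.

Lemma spec_exists c n T : 1 <= c -> (0 < n)%nat -> 1 <= T ->
  exists j, H c n j <= T < H c n (S j).
Proof. intros Hc Hn HT. apply NNPP. intros Hno.
assert (forall j, H c n j <= T).
{ induction j. unfold H. rewrite C_n0. simpl. lra.
  destruct (Rlt_or_le T (H c n (S j))) as [h|h]; auto. exfalso. apply Hno. exists j. auto. }
destruct (INR_unbounded T) as [N HN]. pose proof (H0 N). pose proof (H_ge c n N Hn Hc). lra. Qed.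

Lemma spec_max c n T j i : 1 <= c -> H c n j <= T < H c n (S j) -> H c n i <= T -> (i <= j)%nat.
Proof. intros Hc [h1 h2] h3. destruct (le_lt_dec i j) as [?|l0]; auto.
pose proof (H_mono c n (S j) i Hc l0). lra. Qed.

Lemma sum_term (F : nat -> R) N i : (forall j, 0 <= F j) -> (i <= N)%nat -> F i <= sum_f_R0 F N.
Proof. intros Hp. induction N; intros Hi.
replace i with 0%nat by lia. simpl. lra.
simpl. destruct (Nat.eq_dec i (S N)). subst. pose proof (cond_pos_sum F N Hp). lra.
pose proof (IHN ltac:(lia)). pose proof (Hp (S N)). lra. Qed.

Lemma binom_term n m x : 0 <= x -> C (n+m) n * x^m <= (1+x)^(n+m).
Proof. intros Hx. rewrite binomial.
replace (C (n+m) n * x^m) with ((fun i => C (n+m) i * 1^i * x^(n+m-i)) n).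
apply (sum_term (fun i => C (n+m) i * 1^i * x^(n+m-i))). intros j. pose proof (C_nonneg (n+m) j). rewrite pow1.
pose proof (pow_le x (n+m-j) Hx). nra. lia.
simpl. rewrite pow1. replace (n+m-n)%nat with m by lia. ring. Qed.

Definition Phi c x := x*ln c + (1+x)*ln(1+x) - x*ln x.

Lemma exp_pow' u n : exp u ^ n = exp (INR n * u).
Proof. induction n. simpl. rewrite Rmult_0_l, exp_0. auto.
simpl pow. rewrite IHn, <- exp_plus, S_INR. f_equal. ring. Qed.

Lemma exp_le' u v : u <= v -> exp u <= exp v.
Proof. intros h. destruct (Rle_lt_or_eq_dec _ _ h) as [h'|h']. left; apply exp_increasing; auto. subst; lra. Qed.

Lemma ln_ge0 c : 1 <= c -> 0 <= ln c.
Proof. intros h. destruct (Rle_lt_or_eq_dec _ _ h) as [h'|h']. rewrite <- ln_1. left. apply ln_increasing; lra.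
subst. rewrite ln_1. lra. Qed.

Lemma main_ineq c x n m : 1 <= c -> 0 < x -> INR m <= x * INR n ->
  c^m * C (n+m) n <= exp (Phi c x) ^ n.
Proof. intros Hc Hx Hm.
pose proof (binom_term n m x (Rlt_le _ _ Hx)).
assert (0 < x^m) by (apply pow_lt; auto).
assert (0 < c^m) by (apply pow_lt; lra).
assert (c^m * C (n+m) n <= c^m * (1+x)^(n+m) / x^m).
{ unfold Rdiv. rewrite Rmult_assoc. apply Rmult_le_compat_l; [lra|].
  apply Rmult_le_reg_r with (x^m). auto. rewrite Rmult_assoc, Rinv_l by lra. lra. }
eapply Rle_trans. apply H3.
rewrite exp_pow'.
assert (c^m * (1+x)^(n+m) / x^m = exp (INR m * ln c + INR (n+m) * ln (1+x) - INR m * ln x)).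
{ unfold Rminus. rewrite !exp_plus, exp_Ropp. rewrite <- !ln_pow by lra. rewrite !exp_ln.
  unfold Rdiv. auto. auto. apply pow_lt; lra. lra. }
rewrite H4. apply exp_le'. unfold Phi. rewrite plus_INR.
assert (0 <= ln c) by (apply ln_ge0; auto).
assert (ln x < ln (1+x)) by (apply ln_increasing; lra).
set (L := ln c + ln (1+x) - ln x).
assert (0 <= L) by (unfold L; lra).
assert (0 <= (x * INR n - INR m) * L) by (apply Rmult_le_pos; lra).
unfold L in *. nra. Qed.

Lemma cont c a t : 0 < a -> continuity_pt (fun x => exp (Phi c x) - t) a.
Proof. intros Ha. apply continuity_pt_filterlim.
apply (ex_derive_continuous (K:=R_AbsRing) (V:=R_NormedModule) (fun x => exp (Phi c x) - t) a).
unfold Phi. auto_derive. lra. Qed.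

Lemma ln_le' u v : 0 < u -> u <= v -> ln u <= ln v.
Proof. intros hu h. destruct (Rle_lt_or_eq_dec _ _ h) as [h'|h']. left; apply ln_increasing; auto. subst; lra. Qed.

Lemma ln_le_x y : 0 < y -> ln y <= y - 1.
Proof. intros hy. rewrite <- (ln_exp (y-1)). apply ln_le'. auto.
pose proof (exp_ineq1_le (y-1)). lra. Qed.

Lemma exists_sol c t : 1 <= c <= 2 -> 1 < t -> exists x, 0 < x /\ exp (Phi c x) = t.
Proof. intros [Hc1 Hc2] Ht.
assert (Hlt : 0 < ln t) by (rewrite <- ln_1; apply ln_increasing; lra).
assert (Hlc : ln c <= 1).
{ rewrite <- (ln_exp 1). apply ln_le'. lra. pose proof (exp_ineq1 1 ltac:(lra)). lra. }
assert (Hlc0 := ln_ge0 c Hc1).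
set (s := Rmin 1 (ln t / 10)).
assert (Hs0 : 0 < s) by (unfold s; apply Rmin_glb_lt; lra).
assert (Hs1 : s <= 1) by (unfold s; apply Rmin_l).
assert (Hs2 : s <= ln t / 10) by (unfold s; apply Rmin_r).
set (x0 := s^2).
assert (Hx0 : 0 < x0) by (unfold x0; apply pow_lt; auto).
assert (Hx01 : x0 <= s) by (unfold x0; simpl; nra).
assert (Hlow : exp (Phi c x0) - t < 0).
{ assert (Phi c x0 < ln t).
  { unfold Phi.
    assert (A1 : ln (1+x0) <= x0) by (pose proof (ln_le_x (1+x0)); lra).
    assert (A2 : 0 <= ln (1+x0)) by (apply ln_ge0; lra).
    assert (A3 : - ln s <= / s - 1).
    { rewrite <- ln_Rinv by auto. apply ln_le_x. apply Rinv_0_lt_compat; auto. }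
    assert (A4 : ln x0 = 2 * ln s) by (unfold x0; rewrite ln_pow by auto; simpl; ring).
    assert (A5 : - (x0 * ln x0) <= 2 * s).
    { rewrite A4. unfold x0. simpl.
      assert (s * s * / s = s) by (field; lra).
      assert (- ln s * (2 * (s*s)) <= (/ s - 1) * (2 * (s*s))) by (apply Rmult_le_compat_r; nra).
      nra. }
    assert (x0 * ln c <= x0) by nra.
    assert ((1+x0) * ln (1+x0) <= 2 * s) by nra.
    lra. }
  pose proof (exp_increasing _ _ H0) as E. rewrite exp_ln in E by lra. lra. }
assert (Hup : 0 < exp (Phi c t) - t).
{ assert (ln (1+t) <= Phi c t).
  { unfold Phi. assert (ln t < ln (1+t)) by (apply ln_increasing; lra). nra. }
  pose proof (exp_le' _ _ H0) as E. rewrite exp_ln in E by lra. lra. }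
destruct (Ranalysis5.IVT_interv (fun x => exp (Phi c x) - t) x0 t) as [z [Hz1 Hz2]].
intros a0 Ha0. apply cont. lra. lra. auto. auto.
exists z. split. lra. lra. Qed.

Lemma f_eq x : f x = exp (Phi 1 x).
Proof. unfold f, Rpower, Phi. rewrite ln_1.
replace (x*0 + (1+x) * ln (1+x) - x * ln x) with ((1+x) * ln (1+x) + - (x * ln x)) by ring.
rewrite exp_plus, exp_Ropp. reflexivity. Qed.

Lemma g_eq x : g x = exp (Phi 2 x).
Proof. unfold g, Rpower, Phi.
replace (x * ln 2 + (1+x) * ln (1+x) - x * ln x) with (x * ln 2 + (1+x) * ln (1+x) + - (x * ln x)) by ring.
rewrite !exp_plus, exp_Ropp. reflexivity. Qed.

Lemma a_spec t : 1 < t -> 0 < a t /\ exp (Phi 1 (a t)) = t.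
Proof. intros Ht. rewrite <- f_eq. unfold a. apply epsilon_spec.
destruct (exists_sol 1 t ltac:(lra) Ht) as [x [h1 h2]]. exists x. rewrite f_eq. auto. Qed.

Lemma b_spec t : 1 < t -> 0 < b t /\ exp (Phi 2 (b t)) = t.
Proof. intros Ht. rewrite <- g_eq. unfold b. apply epsilon_spec.
destruct (exists_sol 2 t ltac:(lra) Ht) as [x [h1 h2]]. exists x. rewrite g_eq. auto. Qed.

Lemma H1_eq n j : H 1 n j = C (n+j) n.
Proof. unfold H. rewrite pow1. ring. Qed.

Lemma k_spec n t : 1 < t -> (0 < n)%nat -> H 1 n (k n t) <= t^n < H 1 n (S (k n t)).
Proof. intros Ht Hn. rewrite !H1_eq. replace (n + S (k n t))%nat with (n + k n t + 1)%nat by lia.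
unfold k. apply epsilon_spec.
destruct (spec_exists 1 n (t^n) ltac:(lra) Hn (pow_R1_Rle t n ltac:(lra))) as [j hj].
exists j. rewrite !H1_eq in hj. replace (n + j + 1)%nat with (n + S j)%nat by lia. auto. Qed.

Lemma l_spec n t : 1 < t -> (0 < n)%nat -> H 2 n (l n t) <= t^n < H 2 n (S (l n t)).
Proof. intros Ht Hn. unfold H. replace (n + S (l n t))%nat with (n + l n t + 1)%nat by lia.
replace (S (l n t)) with (l n t + 1)%nat by lia.
unfold l. apply epsilon_spec.
destruct (spec_exists 2 n (t^n) ltac:(lra) Hn (pow_R1_Rle t n ltac:(lra))) as [j hj].
exists j. unfold H in hj. replace (n + j + 1)%nat with (n + S j)%nat by lia.
replace (j + 1)%nat with (S j) by lia. auto. Qed.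

Lemma floor_part c x t n j : 1 <= c -> 0 < x -> exp (Phi c x) = t ->
  H c n j <= t^n < H c n (S j) -> (floorZ (x * INR n) <= Z.of_nat j)%Z.
Proof. intros Hc Hx Ht Hs. unfold floorZ.
pose proof (base_Int_part (x * INR n)) as [B1 B2].
destruct (Z_le_gt_dec (Int_part (x * INR n)) 0) as [hz|hz]. lia.
set (z := Int_part (x * INR n)) in *.
assert (Hm : IZR z = INR (Z.to_nat z)) by (rewrite INR_IZR_INZ, Z2Nat.id by lia; auto).
assert (m_le : (Z.to_nat z <= j)%nat).
{ apply (spec_max c n (t^n) j (Z.to_nat z) Hc Hs).
  rewrite <- Ht. unfold H. apply main_ineq; auto. lra. }
lia. Qed.

Lemma pos_part c n T j : 1 <= c -> H c n j <= T < H c n (S j) -> ((0 < j)%nat <-> H c n 1 <= T).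
Proof. intros Hc [h1 h2]. split; intros h.
eapply Rle_trans. apply (H_mono c n 1 j Hc h). auto.
destruct j. lra. lia. Qed.

Theorem lemma2p1 (t : R) (n : nat) :
  1 < t <= 2 -> (0 < n)%nat ->
  (floorZ (a t * INR n) <= Z.of_nat (k n t))%Z /\
  ((0 < k n t)%nat <-> INR n + 1 <= t ^ n) /\
  (floorZ (b t * INR n) <= Z.of_nat (l n t))%Z /\
  ((0 < l n t)%nat <-> 2 * (INR n + 1) <= t ^ n).
Proof. intros [Ht1 Ht2] Hn.
destruct (a_spec t Ht1) as [ha1 ha2]. destruct (b_spec t Ht1) as [hb1 hb2].
pose proof (k_spec n t Ht1 Hn) as hk. pose proof (l_spec n t Ht1 Hn) as hl.
split; [|split; [|split]].
- eapply floor_part; eauto. lra.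
- rewrite (pos_part 1 n (t^n) (k n t) ltac:(lra) hk). rewrite H1_eq, C_n1. tauto.
- eapply floor_part; eauto. lra.
- rewrite (pos_part 2 n (t^n) (l n t) ltac:(lra) hl). unfold H. rewrite C_n1.
  replace (2^1) with 2 by ring. tauto.
Qed.
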